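(* Let $a,b>0$, let $\chi_a,\chi_b$ be continuous kernels with $\operatorname{supp}\chi_a\subseteq[e^{-a},e^{a}]$ and $\operatorname{supp}\chi_b\subseteq[e^{-b},e^{b}]$, and let $\alpha\in\mathbb{R}$. Define $\chi:\mathbb{R}^+\to\mathbb{R}$ by $$\chi(u):=(1-\alpha)\,\chi_a(2ue^{-a-1})+\alpha\,\chi_b(2ue^{b}),\qquad u\in\mathbb{R}^+.$$ Then $\chi$ is a kernel with $\chi(1)=0$, and for every bounded $f:\mathbb{R}^+\to\mathbb{R}$ and every point $t\in\mathbb{R}^+$ of non-removable jump discontinuity of $f$, $$\lim_{w\to\infty}(S_w^\chi f)(t)=\alpha f(t+0)+(1-\alpha)f(t-0).$$
   Context: Let $\mathbb{R}^+=(0,\infty)$. For $\chi:\mathbb{R}^+\to\mathbb{R}$ and $\nu\ge 0$ set $M_\nu(\chi):=\sup_{u>0}\sum_{k\in\mathbb{Z}}|\chi(e^{-k}u)|\,|k-\log u|^\nu$ (with $|k-\log u|^0:=1$). A kernel is a function $\chi:\mathbb{R}^+\to\mathbb{R}$ such that (K1) $\sum_{k\in\mathbb{Z}}\chi(e^{-k}u)=1$ for every $u\in\mathbb{R}^+$, and (K2) $M_0(\chi)<\infty$ and $M_\nu(\chi)<\infty$ for some $\nu>0$. For a bounded $f:\mathbb{R}^+\to\mathbb{R}$, $w>0$ and $t\in\mathbb{R}^+$, the exponential sampling series is $(S_w^\chi f)(t)=\sum_{k\in\mathbb{Z}}\chi(e^{-k}t^w)\,f(e^{k/w})$. $t$ is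 a non-removable jump discontinuity of $f$ if $f(t+0)=\lim_{p\to0^+}f(t+p)$ and $f(t-0)=\lim_{p\to0^+}f(t-p)$ exist, are finite, and $f(t+0)\ne f(t-0)$. *)

(* Defs.v *)
From Stdlib Require Import Reals ZArith.
From Coquelicot Require Import Coquelicot.
Open Scope R_scope.

Definition rpow (x nu : R) : R :=
  if Req_EM_T x 0 then (if Req_EM_T nu 0 then 1 else 0) else Rpower x nu.

(* A series over Z: sum_{k>=0} g k converges to l1, sum_{k<0} g k to l2, l = l1+l2. *)
Definition Zsum_is (g : Z -> R) (l : R) : Prop :=
  exists l1 l2,
    is_series (fun n : nat => g (Z.of_nat n)) l1 /\
    is_series (fun n : nat => g (- Z.of_nat n - 1)%Z) l2 /\ l = l1 + l2.

(* Value of a series over Z (meaningful when it converges). *)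
Definition Zsum (g : Z -> R) : R :=
  Series (fun n : nat => g (Z.of_nat n)) + Series (fun n : nat => g (- Z.of_nat n - 1)%Z).

Definition M_finite (chi : R -> R) (nu : R) : Prop :=
  exists C : R, forall u : R, 0 < u ->
    exists s, Zsum_is (fun k => Rabs (chi (exp (- IZR k) * u)) * rpow (Rabs (IZR k - ln u)) nu) s
              /\ s <= C.

(* Kernel: (K1) and (K2); chi is only considered on (0,oo). *)
Definition is_kernel (chi : R -> R) : Prop :=
  (forall u : R, 0 < u -> Zsum_is (fun k => chi (exp (- IZR k) * u)) 1) /\
  M_finite chi 0 /\ (exists nu : R, 0 < nu /\ M_finite chi nu).

Definition sampling_series (chi f : R -> R) (w t : R) : R :=
  Zsum (fun k => chi (exp (- IZR k) * Rpower t w) * f (exp (IZR k / w))).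

Definition bounded_pos (f : R -> R) : Prop :=
  exists B : R, forall x : R, 0 < x -> Rabs (f x) <= B.

Definition jump_disc (f : R -> R) (t lp lm : R) : Prop :=
  filterlim f (at_right t) (locally lp) /\
  filterlim f (at_left t) (locally lm) /\ lp <> lm.

Definition cont_pos (g : R -> R) : Prop := forall u : R, 0 < u -> continuity_pt g u.

(* supp g ⊆ [e^{-a}, e^a] (the interval is closed, so this is equivalent to
   the nonzero set lying in it). *)
Definition supp_in (g : R -> R) (a : R) : Prop :=
  forall u : R, 0 < u -> g u <> 0 -> exp (- a) <= u <= exp a.

(* Main.v *)
Require Import Defs.
From Stdlib Require Import Reals ZArith Lra FunctionalExtensionality.
From Coquelicot Require Import Coquelicot.
Open Scope R_scope.

Definition Zex (g : Z -> R) : Prop :=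
  ex_series (fun n : nat => g (Z.of_nat n)) /\ ex_series (fun n : nat => g (- Z.of_nat n - 1)%Z).

Lemma Zsum_is_iff g l : Zsum_is g l <-> Zex g /\ Zsum g = l.
Proof.
split.
- intros (l1 & l2 & H1 & H2 & ->). split. split; eexists; eauto.
  unfold Zsum. rewrite (is_series_unique _ _ H1), (is_series_unique _ _ H2). reflexivity.
- intros [[E1 E2] <-]. exists (Series (fun n : nat => g (Z.of_nat n))),
   (Series (fun n : nat => g (- Z.of_nat n - 1)%Z)).
  split. apply Series_correct; auto. split. apply Series_correct; auto. reflexivity.
Qed.

Lemma Zex_lin g h c1 c2 : Zex g -> Zex h ->
  Zex (fun k => c1 * g k + c2 * h k) /\
  Zsum (fun k => c1 * g k + c2 * h k) = c1 * Zsum g + c2 * Zsum h.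
Proof.
intros [G1 G2] [H1 H2].
assert (A: forall u v : nat -> R, ex_series u -> ex_series v ->
   ex_series (fun n => c1 * u n + c2 * v n) /\
   Series (fun n => c1 * u n + c2 * v n) = c1 * Series u + c2 * Series v).
{ intros u v Eu Ev.
  assert (E1 : ex_series (fun n => c1 * u n)) by (apply (ex_series_scal_l c1 u Eu)).
  assert (E2 : ex_series (fun n => c2 * v n)) by (apply (ex_series_scal_l c2 v Ev)).
  split. apply (ex_series_plus _ _ E1 E2).
  rewrite Series_plus by auto. rewrite !Series_scal_l. reflexivity. }
destruct (A _ _ G1 H1) as [P1 Q1]. destruct (A _ _ G2 H2) as [P2 Q2].
split. split; auto. unfold Zsum. rewrite Q1, Q2. ring.
Qed.

Lemma Zex_le g h : (forall k, Rabs (g k) <= h k) -> Zex h ->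
  Zex g /\ Rabs (Zsum g) <= Zsum h.
Proof.
intros Hle [H1 H2].
assert (A: forall (u v : nat -> R), (forall n, Rabs (u n) <= v n) -> ex_series v ->
   ex_series u /\ Rabs (Series u) <= Series v).
{ intros u v Huv Ev.
  assert (Ea : ex_series (fun n => Rabs (u n))).
  { apply (ex_series_le (fun n => Rabs (u n)) v); auto.
    intros n. unfold norm; simpl. unfold abs; simpl. rewrite Rabs_Rabsolu. auto. }
  split. apply ex_series_Rabs; auto.
  eapply Rle_trans. apply Series_Rabs; auto.
  apply Series_le; auto. intros n; split; auto. apply Rabs_pos. }
destruct (A _ _ (fun n => Hle _) H1) as [P1 Q1].
destruct (A _ _ (fun n => Hle _) H2) as [P2 Q2].
split. split; auto. unfold Zsum.
eapply Rle_trans. apply Rabs_triang. lra.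
Qed.


Lemma exp_le_inv' x y : exp x <= exp y -> x <= y.
Proof. intros H. destruct (Rle_or_lt x y) as [h|h]; auto.
 apply exp_increasing in h. lra. Qed.

Lemma ln2_bounds : 0 < ln 2 < 1.
Proof. split. pose proof ln_lt_2. lra.
 assert (H: ln 2 < ln (exp 1)).
 { apply ln_increasing; [lra|]. pose proof (exp_ineq1 1 R1_neq_R0). lra. }
 rewrite ln_exp in H. exact H. Qed.

Lemma arg_exp k u c : 0 < u ->
  2 * (exp (- IZR k) * u) * exp c = exp (- IZR k + ln 2 + ln u + c).
Proof. intros Hu. rewrite !exp_plus, exp_ln, exp_ln by lra. ring. Qed.

Lemma supp_a (chi_a : R -> R) a u k : supp_in chi_a a -> 0 < u ->
  chi_a (2 * (exp (- IZR k) * u) * exp (- a - 1)) <> 0 ->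
  ln u + ln 2 - 1 - 2 * a <= IZR k <= ln u + ln 2 - 1.
Proof.
intros Hs Hu Hn. apply Hs in Hn. 2: { rewrite arg_exp by auto. apply exp_pos. }
rewrite arg_exp in Hn by auto. destruct Hn as [H1 H2].
apply exp_le_inv' in H1. apply exp_le_inv' in H2. lra.
Qed.

Lemma supp_b (chi_b : R -> R) b u k : supp_in chi_b b -> 0 < u ->
  chi_b (2 * (exp (- IZR k) * u) * exp b) <> 0 ->
  ln u + ln 2 <= IZR k <= ln u + ln 2 + 2 * b.
Proof.
intros Hs Hu Hn. apply Hs in Hn. 2: { rewrite arg_exp by auto. apply exp_pos. }
rewrite arg_exp in Hn by auto. destruct Hn as [H1 H2].
apply exp_le_inv' in H1. apply exp_le_inv' in H2. lra.
Qed.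

Lemma rpow0 x : rpow x 0 = 1.
Proof. unfold rpow. destruct (Req_EM_T x 0), (Req_EM_T 0 0); try lra.
 unfold Rpower. rewrite Rmult_0_l. apply exp_0. Qed.

Lemma rpow1 x : 0 <= x -> rpow x 1 = x.
Proof. intros H. unfold rpow. destruct (Req_EM_T x 0), (Req_EM_T 1 0); try lra.
 apply Rpower_1. lra. Qed.


Lemma M_abs (A B rho : Z -> R) (al R : R) : 0 <= R -> (forall k, 0 <= rho k) ->
  (forall k, A k <> 0 -> rho k <= R) -> (forall k, B k <> 0 -> rho k <= R) ->
  Zex (fun k => Rabs (A k)) -> Zex (fun k => Rabs (B k)) ->
  Zex (fun k => Rabs ((1 - al) * A k + al * B k) * rho k) /\
  Zsum (fun k => Rabs ((1 - al) * A k + al * B k) * rho k) <=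
    R * Rabs (1 - al) * Zsum (fun k => Rabs (A k)) + R * Rabs al * Zsum (fun k => Rabs (B k)).
Proof.
intros HR Hr HA HB EA EB.
destruct (Zex_lin _ _ (R * Rabs (1 - al)) (R * Rabs al) EA EB) as [E1 S1].
rewrite <- S1.
destruct (Zex_le (fun k => Rabs ((1 - al) * A k + al * B k) * rho k) (fun k => R * Rabs (1 - al) * Rabs (A k) + R * Rabs al * Rabs (B k))) as [E2 S2]; [|exact E1|].
- intros k. rewrite Rabs_mult, Rabs_Rabsolu, (Rabs_right (rho k)) by (apply Rle_ge; auto).
  assert (TA: Rabs (A k) * rho k <= R * Rabs (A k)).
  { destruct (Req_dec (A k) 0) as [h|h]. rewrite h, Rabs_R0. lra.
    specialize (HA k h). pose proof (Rabs_pos (A k)). nra. }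
  assert (TB: Rabs (B k) * rho k <= R * Rabs (B k)).
  { destruct (Req_dec (B k) 0) as [h|h]. rewrite h, Rabs_R0. lra.
    specialize (HB k h). pose proof (Rabs_pos (B k)). nra. }
  eapply Rle_trans. apply Rmult_le_compat_r. auto. apply Rabs_triang.
  rewrite !Rabs_mult. pose proof (Rabs_pos (1 - al)). pose proof (Rabs_pos al). nra.
- split; auto. eapply Rle_trans. apply Rle_abs. auto.
Qed.

Lemma M0_get (g : R -> R) : M_finite g 0 -> exists C, forall v, 0 < v ->
  Zex (fun k => Rabs (g (exp (- IZR k) * v))) /\ Zsum (fun k => Rabs (g (exp (- IZR k) * v))) <= C.
Proof.
intros [C HC]. exists C. intros v Hv. destruct (HC v Hv) as [s [Hs Hle]].
apply Zsum_is_iff in Hs. destruct Hs as [E S].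
assert (Ef : (fun k => Rabs (g (exp (- IZR k) * v)) * rpow (Rabs (IZR k - ln v)) 0) =
             (fun k => Rabs (g (exp (- IZR k) * v)))).
{ apply functional_extensionality. intros k. rewrite rpow0. ring. }
rewrite Ef in E, S. split; auto. lra.
Qed.

Lemma resc (g : R -> R) k u c : g (2 * (exp (- IZR k) * u) * exp c) = g (exp (- IZR k) * (2 * u * exp c)).
Proof. f_equal. ring. Qed.

Lemma kernel_part a b alpha chi_a chi_b : 0 < a -> 0 < b ->
  is_kernel chi_a -> supp_in chi_a a -> is_kernel chi_b -> supp_in chi_b b ->
  is_kernel (fun u => (1 - alpha) * chi_a (2 * u * exp (- a - 1)) + alpha * chi_b (2 * u * exp b)).
Proof.
intros Ha Hb [Ka1 [Ka2 _]] Sa [Kb1 [Kb2 _]] Sb.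
destruct (M0_get _ Ka2) as [Ca HCa]. destruct (M0_get _ Kb2) as [Cb HCb].
assert (Hva : forall u, 0 < u -> 0 < 2 * u * exp (- a - 1)) by (intros; pose proof (exp_pos (-a-1)); nra).
assert (Hvb : forall u, 0 < u -> 0 < 2 * u * exp b) by (intros; pose proof (exp_pos b); nra).
assert (MB : forall (R : R) nu, 0 <= R ->
   (forall u k, 0 < u -> 0 <= rpow (Rabs (IZR k - ln u)) nu) ->
   (forall u k, 0 < u -> (Rabs (IZR k - ln u) <= 2 * a + 2 * b + 2) -> rpow (Rabs (IZR k - ln u)) nu <= R) ->
   M_finite (fun u => (1 - alpha) * chi_a (2 * u * exp (- a - 1)) + alpha * chi_b (2 * u * exp b)) nu).
{ intros R nu HR Hpos Hbd.
  exists (R * Rabs (1 - alpha) * Ca + R * Rabs alpha * Cb).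
  intros u Hu.
  destruct (HCa _ (Hva u Hu)) as [EA SA]. destruct (HCb _ (Hvb u Hu)) as [EB SB].
  destruct (M_abs (fun k => chi_a (exp (- IZR k) * (2 * u * exp (- a - 1))))
                  (fun k => chi_b (exp (- IZR k) * (2 * u * exp b)))
                  (fun k => rpow (Rabs (IZR k - ln u)) nu) alpha R HR) as [E S]; auto.
  - intros k Hk. apply Hbd; auto. rewrite <- resc in Hk. apply supp_a in Hk; auto.
    pose proof ln2_bounds. apply Rabs_le. lra.
  - intros k Hk. apply Hbd; auto. rewrite <- resc in Hk. apply supp_b in Hk; auto.
    pose proof ln2_bounds. apply Rabs_le. lra.
  - eexists. split. apply Zsum_is_iff. split.
    2: reflexivity.
    assert (Ef : (fun k => Rabs ((1 - alpha) * chi_a (exp (- IZR k) * (2 * u * exp (- a - 1))) + alpha * chi_b (exp (- IZR k) * (2 * u * exp b))) * rpow (Rabs (IZR k - ln u)) nu)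
       = (fun k => Rabs ((fun u0 => (1 - alpha) * chi_a (2 * u0 * exp (- a - 1)) + alpha * chi_b (2 * u0 * exp b)) (exp (- IZR k) * u)) * rpow (Rabs (IZR k - ln u)) nu)).
    { apply functional_extensionality. intros k. simpl. rewrite (resc chi_a), (resc chi_b). reflexivity. }
    rewrite <- Ef. exact E.
    eapply Rle_trans. 2: { pose proof (Rabs_pos (1 - alpha)). pose proof (Rabs_pos alpha).
       assert (R * Rabs (1 - alpha) * Zsum (fun k => Rabs (chi_a (exp (- IZR k) * (2 * u * exp (- a - 1))))) <= R * Rabs (1 - alpha) * Ca).
       { apply Rmult_le_compat_l; auto. apply Rmult_le_pos; auto. }
       assert (R * Rabs alpha * Zsum (fun k => Rabs (chi_b (exp (- IZR k) * (2 * u * exp b)))) <= R * Rabs alpha * Cb).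
       { apply Rmult_le_compat_l; auto. apply Rmult_le_pos; auto. }
       apply Rplus_le_compat. exact H1. exact H2. }
    assert (Ef : (fun k => Rabs ((1 - alpha) * chi_a (exp (- IZR k) * (2 * u * exp (- a - 1))) + alpha * chi_b (exp (- IZR k) * (2 * u * exp b))) * rpow (Rabs (IZR k - ln u)) nu)
       = (fun k => Rabs ((fun u0 => (1 - alpha) * chi_a (2 * u0 * exp (- a - 1)) + alpha * chi_b (2 * u0 * exp b)) (exp (- IZR k) * u)) * rpow (Rabs (IZR k - ln u)) nu)).
    { apply functional_extensionality. intros k. simpl. rewrite (resc chi_a), (resc chi_b). reflexivity. }
    rewrite <- Ef. exact S. }
split; [|split].
- intros u Hu. apply Zsum_is_iff.
  pose proof (Ka1 _ (Hva u Hu)) as K1. pose proof (Kb1 _ (Hvb u Hu)) as K2.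
  apply Zsum_is_iff in K1. apply Zsum_is_iff in K2. destruct K1 as [E1 S1], K2 as [E2 S2].
  destruct (Zex_lin _ _ (1 - alpha) alpha E1 E2) as [E S].
  assert (Ef : (fun k => (1 - alpha) * chi_a (exp (- IZR k) * (2 * u * exp (- a - 1))) + alpha * chi_b (exp (- IZR k) * (2 * u * exp b)))
       = (fun k => (fun u0 => (1 - alpha) * chi_a (2 * u0 * exp (- a - 1)) + alpha * chi_b (2 * u0 * exp b)) (exp (- IZR k) * u))).
  { apply functional_extensionality. intros k. simpl. rewrite (resc chi_a), (resc chi_b). reflexivity. }
  rewrite <- Ef. split; auto. rewrite S, S1, S2. ring.
- apply (MB 1). lra. intros; rewrite rpow0; lra. intros; rewrite rpow0; lra.
- exists 1. split. lra. apply (MB (2 * a + 2 * b + 2)). lra.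
  intros; rewrite rpow1 by apply Rabs_pos; apply Rabs_pos.
  intros; rewrite rpow1 by apply Rabs_pos; auto.
Qed.


Lemma side (A x : Z -> R) (f : R -> R) lm eps C Bf : 0 <= eps ->
  Zsum_is A 1 -> Zex (fun k => Rabs (A k)) -> Zsum (fun k => Rabs (A k)) <= C ->
  (forall k, Rabs (f (x k)) <= Bf) -> (forall k, A k <> 0 -> Rabs (f (x k) - lm) <= eps) ->
  Zex (fun k => A k * f (x k)) /\ Rabs (Zsum (fun k => A k * f (x k)) - lm) <= eps * C.
Proof.
intros He HA EA SA Hb Hc. apply Zsum_is_iff in HA. destruct HA as [EA1 SA1].
destruct (Zex_lin _ _ Bf 0 EA EA) as [E1 _].
destruct (Zex_le (fun k => A k * f (x k)) (fun k => Bf * Rabs (A k) + 0 * Rabs (A k))) as [E2 _]; [| exact E1 |].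
{ intros k. rewrite Rabs_mult. pose proof (Hb k). pose proof (Rabs_pos (A k)). pose proof (Rabs_pos (f (x k))). nra. }
destruct (Zex_lin _ _ 1 (- lm) E2 EA1) as [E3 S3].
destruct (Zex_lin _ _ eps 0 EA EA) as [E4 S4].
destruct (Zex_le (fun k => 1 * (A k * f (x k)) + - lm * A k) (fun k => eps * Rabs (A k) + 0 * Rabs (A k))) as [E5 S5]; [| exact E4 |].
{ intros k. replace (1 * (A k * f (x k)) + - lm * A k) with (A k * (f (x k) - lm)) by ring.
  rewrite Rabs_mult. pose proof (Rabs_pos (A k)).
  destruct (Req_dec (A k) 0) as [h|h]. rewrite h, Rabs_R0. lra.
  pose proof (Hc k h). nra. }
split; auto. rewrite S3, SA1, S4 in S5.
replace (1 * Zsum (fun k => A k * f (x k)) + - lm * 1) with (Zsum (fun k => A k * f (x k)) - lm) in S5 by ring.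
nra.
Qed.

Lemma left_nb (f : R -> R) t lm : filterlim f (at_left t) (locally lm) ->
  forall eps, 0 < eps -> exists d, 0 < d /\ forall y, t - d < y < t -> Rabs (f y - lm) < eps.
Proof.
intros H eps He. apply filterlim_locally with (eps := mkposreal eps He) in H.
destruct H as [d Hd]. exists d. split. apply cond_pos. intros y Hy.
apply Hd. 2: lra. unfold ball; simpl; unfold AbsRing_ball, abs, minus, plus, opp; simpl.
apply Rabs_lt_between. lra.
Qed.

Lemma right_nb (f : R -> R) t lp : filterlim f (at_right t) (locally lp) ->
  forall eps, 0 < eps -> exists d, 0 < d /\ forall y, t < y < t + d -> Rabs (f y - lp) < eps.
Proof.
intros H eps He. apply filterlim_locally with (eps := mkposreal eps He) in H.
destruct H as [d Hd]. exists d. split. apply cond_pos. intros y Hy.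
apply Hd. 2: lra. unfold ball; simpl; unfold AbsRing_ball, abs, minus, plus, opp; simpl.
apply Rabs_lt_between. lra.
Qed.


Lemma ln_Rp t w : ln (Rpower t w) = w * ln t.
Proof. unfold Rpower. apply ln_exp. Qed.

Lemma geo_left a t w d (k : R) : 0 < a -> 0 < t -> 0 < d -> 1 < w -> t * (2 * a + 1) / d < w ->
  w * ln t + ln 2 - 1 - 2 * a <= k <= w * ln t + ln 2 - 1 ->
  t - d < exp (k / w) < t.
Proof.
intros Ha Ht Hd Hw Hw2 [H1 H2]. pose proof ln2_bounds.
assert (Hiw : w * / w = 1) by (field; lra).
assert (Hiwp : 0 < / w) by (apply Rinv_0_lt_compat; lra).
split.
- assert (Hk : ln t - (2 * a + 1) / w <= k / w).
  { assert (0 <= (k - (w * ln t - (2*a+1))) * / w) by (apply Rmult_le_pos; lra).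
    assert (w * ln t * /w = ln t) by (field; lra). unfold Rdiv. lra. }
  assert (E : t - d < exp (ln t - (2 * a + 1) / w)).
  { unfold Rminus; rewrite exp_plus, exp_ln by auto.
    pose proof (exp_ineq1_le (- ((2 * a + 1) / w))).
    assert (t * (2 * a + 1) / w < d).
    { apply Rmult_lt_reg_r with w. lra. unfold Rdiv in *.
      replace (t * (2 * a + 1) * / w * w) with (t * (2 * a + 1)) by (field; lra).
      apply Rmult_lt_reg_r with (/ d). apply Rinv_0_lt_compat; lra.
      replace (d * w * / d) with w by (field; lra). lra. }
    unfold Rdiv in *. nra. }
  destruct Hk as [Hk|Hk]. apply exp_increasing in Hk. lra. rewrite <- Hk. exact E.
- rewrite <- (exp_ln t) at 1 by auto. apply exp_increasing.
  assert (0 < (w * ln t - k) * / w) by (apply Rmult_lt_0_compat; lra).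
  assert (w * ln t * /w = ln t) by (field; lra). unfold Rdiv. lra.
Qed.

Lemma geo_right b t w d (k : R) : 0 < b -> 0 < t -> 0 < d -> 1 < w -> (2 * b + 1) * (t + d) / d < w ->
  w * ln t + ln 2 <= k <= w * ln t + ln 2 + 2 * b ->
  t < exp (k / w) < t + d.
Proof.
intros Hb Ht Hd Hw Hw2 [H1 H2]. pose proof ln2_bounds.
assert (Hiw : w * / w = 1) by (field; lra).
assert (Hiwp : 0 < / w) by (apply Rinv_0_lt_compat; lra).
split.
- rewrite <- (exp_ln t) at 1 by auto. apply exp_increasing.
  assert (0 < (k - w * ln t) * / w) by (apply Rmult_lt_0_compat; lra).
  assert (w * ln t * /w = ln t) by (field; lra). unfold Rdiv. lra.
- set (y := (2 * b + 1) / w).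
  assert (Hk : k / w <= ln t + y).
  { assert (0 <= (w * ln t + (2 * b + 1) - k) * / w) by (apply Rmult_le_pos; lra).
    assert (w * ln t * /w = ln t) by (field; lra). unfold y, Rdiv. lra. }
  assert (Hy : y * (t + d) < d).
  { unfold y. apply Rmult_lt_reg_r with w. lra. unfold Rdiv in *.
    replace ((2 * b + 1) * / w * (t + d) * w) with ((2 * b + 1) * (t + d)) by (field; lra).
    apply Rmult_lt_reg_r with (/ d). apply Rinv_0_lt_compat; lra.
    replace (d * w * / d) with w by (field; lra). lra. }
  assert (Hy0 : 0 < y) by (unfold y, Rdiv; apply Rmult_lt_0_compat; lra).
  assert (E : exp (ln t + y) < t + d).
  { rewrite exp_plus, exp_ln by auto.
    pose proof (exp_ineq1_le (- y)).
    assert (exp y * exp (- y) = 1) by (rewrite <- exp_plus; replace (y + - y) with 0 by ring; apply exp_0).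
    pose proof (exp_pos y). pose proof (exp_pos (- y)).
    assert (Hy1 : y < 1) by nra.
    assert (exp y * (1 - y) <= 1) by nra.
    assert (t * exp y * (1 - y) <= t) by nra.
    assert (t < (t + d) * (1 - y)) by nra.
    nra. }
  destruct Hk as [Hk|Hk]. apply exp_increasing in Hk. lra. rewrite Hk. exact E.
Qed.


Theorem theorem11 (a b alpha : R) (chi_a chi_b : R -> R) :
  0 < a -> 0 < b ->
  is_kernel chi_a -> cont_pos chi_a -> supp_in chi_a a ->
  is_kernel chi_b -> cont_pos chi_b -> supp_in chi_b b ->
  let chi := fun u => (1 - alpha) * chi_a (2 * u * exp (- a - 1)) + alpha * chi_b (2 * u * exp b) in
  is_kernel chi /\ chi 1 = 0 /\
  (forall (f : R -> R) (t lp lm : R), bounded_pos f -> 0 < t -> jump_disc f t lp lm ->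
     is_lim (fun w => sampling_series chi f w t) p_infty (alpha * lp + (1 - alpha) * lm)).
Proof.
intros Ha Hb Ka _ Sa Kb _ Sb chi.
split; [apply kernel_part; auto|].
pose proof ln2_bounds as L2.
split.
{ unfold chi.
  assert (Z1 : chi_a (2 * 1 * exp (- a - 1)) = 0).
  { destruct (Req_dec (chi_a (2 * 1 * exp (- a - 1))) 0) as [h|h]; auto.
    assert (E : 2 * 1 * exp (- a - 1) = exp (ln 2 + (- a - 1))) by (rewrite exp_plus, exp_ln by lra; ring).
    apply Sa in h. 2: (rewrite E; apply exp_pos). rewrite E in h. destruct h as [h _].
    apply exp_le_inv' in h. lra. }
  assert (Z2 : chi_b (2 * 1 * exp b) = 0).
  { destruct (Req_dec (chi_b (2 * 1 * exp b)) 0) as [h|h]; auto.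
    assert (E : 2 * 1 * exp b = exp (ln 2 + b)) by (rewrite exp_plus, exp_ln by lra; ring).
    apply Sb in h. 2: (rewrite E; apply exp_pos). rewrite E in h. destruct h as [_ h].
    apply exp_le_inv' in h. lra. }
  rewrite Z1, Z2. ring. }
intros f t lp lm [Bf HBf] Ht [Hr [Hl _]].
destruct Ka as [Ka1 [Ka2 _]]. destruct Kb as [Kb1 [Kb2 _]].
destruct (M0_get _ Ka2) as [Ca0 HCa]. destruct (M0_get _ Kb2) as [Cb0 HCb].
set (Ca := Rmax Ca0 0). set (Cb := Rmax Cb0 0).
assert (Ca0le : Ca0 <= Ca) by apply Rmax_l. assert (Cb0le : Cb0 <= Cb) by apply Rmax_l.
assert (Ca_pos : 0 <= Ca) by apply Rmax_r. assert (Cb_pos : 0 <= Cb) by apply Rmax_r.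
apply is_lim_spec. intros eps. simpl.
set (K := Rabs (1 - alpha) * Ca + Rabs alpha * Cb).
assert (Kpos : 0 <= K) by (unfold K; pose proof (Rabs_pos (1 - alpha)); pose proof (Rabs_pos alpha); nra).
set (e' := eps / (K + 1)).
assert (He' : 0 < e') by (unfold e'; apply Rdiv_lt_0_compat; [apply cond_pos|lra]).
destruct (left_nb _ _ _ Hl e' He') as [d1 [Hd1 HL]].
destruct (right_nb _ _ _ Hr e' He') as [d2 [Hd2 HR]].
exists (Rmax 1 (Rmax (t * (2 * a + 1) / d1) ((2 * b + 1) * (t + d2) / d2))).
intros w Hw.
assert (Hw1 : 1 < w) by (eapply Rle_lt_trans; [apply Rmax_l|exact Hw]).
assert (Hw2 : t * (2 * a + 1) / d1 < w)
  by (eapply Rle_lt_trans; [|exact Hw]; eapply Rle_trans; [apply Rmax_l|apply Rmax_r]).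
assert (Hw3 : (2 * b + 1) * (t + d2) / d2 < w)
  by (eapply Rle_lt_trans; [|exact Hw]; eapply Rle_trans; [apply Rmax_r|apply Rmax_r]).
set (u := Rpower t w).
assert (Hu : 0 < u) by (unfold u, Rpower; apply exp_pos).
assert (Hva : 0 < 2 * u * exp (- a - 1)) by (pose proof (exp_pos (-a-1)); nra).
assert (Hvb : 0 < 2 * u * exp b) by (pose proof (exp_pos b); nra).
set (A := fun k => chi_a (exp (- IZR k) * (2 * u * exp (- a - 1)))).
set (B := fun k => chi_b (exp (- IZR k) * (2 * u * exp b))).
set (x := fun k : Z => exp (IZR k / w)).
assert (Hfx : forall k, Rabs (f (x k)) <= Bf) by (intros; apply HBf; unfold x; apply exp_pos).
destruct (HCa _ Hva) as [EA SA]. destruct (HCb _ Hvb) as [EB SB].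
destruct (side A x f lm e' Ca Bf (Rlt_le _ _ He') (Ka1 _ Hva) EA (Rle_trans _ _ _ SA Ca0le) Hfx) as [EA' SA'].
{ intros k Hk. unfold A in Hk. rewrite <- resc in Hk. apply supp_a in Hk; auto.
  replace (ln u) with (w * ln t) in Hk by (unfold u; symmetry; apply ln_Rp). apply (geo_left a t w d1) in Hk; auto; try lra.
  left. apply HL. exact Hk. }
destruct (side B x f lp e' Cb Bf (Rlt_le _ _ He') (Kb1 _ Hvb) EB (Rle_trans _ _ _ SB Cb0le) Hfx) as [EB' SB'].
{ intros k Hk. unfold B in Hk. rewrite <- resc in Hk. apply supp_b in Hk; auto.
  replace (ln u) with (w * ln t) in Hk by (unfold u; symmetry; apply ln_Rp). apply (geo_right b t w d2) in Hk; auto; try lra.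
  left. apply HR. exact Hk. }
destruct (Zex_lin _ _ (1 - alpha) alpha EA' EB') as [_ S].
assert (Eq : sampling_series chi f w t =
   Zsum (fun k => (1 - alpha) * (A k * f (x k)) + alpha * (B k * f (x k)))).
{ unfold sampling_series. f_equal. apply functional_extensionality. intros k.
  unfold chi, A, B, x. fold u. rewrite (resc chi_a), (resc chi_b). ring. }
rewrite Eq, S.
set (Sa' := Zsum (fun k => A k * f (x k))) in *.
set (Sb' := Zsum (fun k => B k * f (x k))) in *.
replace ((1 - alpha) * Sa' + alpha * Sb' - (alpha * lp + (1 - alpha) * lm))
  with ((1 - alpha) * (Sa' - lm) + alpha * (Sb' - lp)) by ring.
eapply Rle_lt_trans. apply Rabs_triang. rewrite !Rabs_mult.
pose proof (Rabs_pos (1 - alpha)). pose proof (Rabs_pos alpha).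
assert (Rabs (1 - alpha) * Rabs (Sa' - lm) <= Rabs (1 - alpha) * (e' * Ca)) by (apply Rmult_le_compat_l; auto).
assert (Rabs alpha * Rabs (Sb' - lp) <= Rabs alpha * (e' * Cb)) by (apply Rmult_le_compat_l; auto).
assert (e' * K < eps).
{ unfold e'. pose proof (cond_pos eps). unfold Rdiv.
  apply Rmult_lt_reg_r with (K + 1). lra.
  replace (eps * / (K + 1) * K * (K + 1)) with (eps * K) by (field; lra). nra. }
unfold K in *. nra.
Qed.
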